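(* Let $G$ be a Polish group, $X$ a Polish space with a continuous $G$-action, and $F\subseteq E^X_G$ a Borel equivalence relation on $X$ such that each $E^X_G$-class contains at most countably many $F$-classes. Then $E^X_G$ is a Borel subset of $X\times X$.
   Context: $E^X_G=\{(x,y):\exists g\in G\ g\cdot x=y\}$ is the orbit equivalence relation. *)

(* Defs.v *)
From Stdlib Require Import Reals.
Open Scope R_scope.

(* A topology on X is given by its predicate of open sets. *)
Definition topology (X : Type) := (X -> Prop) -> Prop.

Definition is_metric {X : Type} (d : X -> X -> R) : Prop :=
  (forall x y, 0 <= d x y) /\
  (forall x y, d x y = 0 <-> x = y) /\
  (forall x y, d x y = d y x) /\
  (forall x y z, d x z <= d x y + d y z).

Definition metric_open {X : Type} (d : X -> X -> R) (U : X -> Prop) : Prop :=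
  forall x, U x -> exists eps, 0 < eps /\ forall y, d x y < eps -> U y.

Definition metric_complete {X : Type} (d : X -> X -> R) : Prop :=
  forall u : nat -> X,
    (forall eps, 0 < eps -> exists N, forall m n, (N <= m)%nat -> (N <= n)%nat ->
        d (u m) (u n) < eps) ->
    exists l, forall eps, 0 < eps -> exists N, forall n, (N <= n)%nat -> d (u n) l < eps.

(* separable: there is a countable dense subset (enumerated by a partial sequence,
   so that the empty space is allowed) *)
Definition metric_separable {X : Type} (d : X -> X -> R) : Prop :=
  exists s : nat -> option X,
    forall x eps, 0 < eps -> exists n y, s n = Some y /\ d x y < eps.

Definition polish {X : Type} (t : topology X) : Prop :=
  exists d : X -> X -> R,
    is_metric d /\ metric_complete d /\ metric_separable d /\
    (forall U, t U <-> metric_open d U).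

Definition prod_topology {X Y : Type} (tX : topology X) (tY : topology Y)
  : topology (X * Y) :=
  fun W => forall p, W p -> exists A B, tX A /\ tY B /\ A (fst p) /\ B (snd p) /\
      (forall x y, A x -> B y -> W (x, y)).

Definition continuous {X Y : Type} (tX : topology X) (tY : topology Y) (f : X -> Y) : Prop :=
  forall V, tY V -> tX (fun x => V (f x)).

Inductive borel {X : Type} (t : topology X) : (X -> Prop) -> Prop :=
| borel_open : forall U, t U -> borel t U
| borel_compl : forall A, borel t A -> borel t (fun x => ~ A x)
| borel_cunion : forall A : nat -> X -> Prop, (forall n, borel t (A n)) ->
    borel t (fun x => exists n, A n x)
| borel_ext : forall A B, borel t A -> (forall x, A x <-> B x) -> borel t B.

Definition is_group {G : Type} (mul : G -> G -> G) (inv : G -> G) (e : G) : Prop :=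
  (forall a b c, mul a (mul b c) = mul (mul a b) c) /\
  (forall a, mul e a = a /\ mul a e = a) /\
  (forall a, mul (inv a) a = e /\ mul a (inv a) = e).

Definition polish_group {G : Type} (tG : topology G)
  (mul : G -> G -> G) (inv : G -> G) (e : G) : Prop :=
  is_group mul inv e /\ polish tG /\
  continuous (prod_topology tG tG) tG (fun p => mul (fst p) (snd p)) /\
  continuous tG tG inv.

Definition continuous_action {G X : Type} (tG : topology G) (tX : topology X)
  (mul : G -> G -> G) (e : G) (act : G -> X -> X) : Prop :=
  (forall x, act e x = x) /\
  (forall g h x, act (mul g h) x = act g (act h x)) /\
  continuous (prod_topology tG tX) tX (fun p => act (fst p) (snd p)).

Definition orbit_eqrel {G X : Type} (act : G -> X -> X) (x y : X) : Prop :=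
  exists g, act g x = y.

Definition equivalence_rel {X : Type} (F : X -> X -> Prop) : Prop :=
  (forall x, F x x) /\ (forall x y, F x y -> F y x) /\
  (forall x y z, F x y -> F y z -> F x z).

Definition borel_rel {X : Type} (tX : topology X) (F : X -> X -> Prop) : Prop :=
  borel (prod_topology tX tX) (fun p => F (fst p) (snd p)).

(* Main.v *)
Require Import Defs.
From Stdlib Require Import Reals Lra Lia Classical ClassicalEpsilon Cantor.
Open Scope R_scope.

Definition nwd {G : Type} (d : G -> G -> R) (N : G -> Prop) : Prop :=
  forall U, metric_open d U -> (exists x, U x) ->
    exists V, metric_open d V /\ (exists x, V x) /\ (forall z, V z -> U z) /\
      (forall z, V z -> ~ N z).

Definition meager {G : Type} (d : G -> G -> R) (M : G -> Prop) : Prop :=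
  exists N : nat -> G -> Prop, (forall n, nwd d (N n)) /\ forall z, M z -> exists n, N n z.

Lemma meager_sub {G} (d : G -> G -> R) (A B : G -> Prop) :
  meager d A -> (forall z, B z -> A z) -> meager d B.
Proof. intros [N [H1 H2]] H. exists N; split; auto. Qed.

Lemma nwd_empty {G} (d : G -> G -> R) : nwd d (fun _ => False).
Proof. intros U HU HUn. exists U; repeat split; auto. Qed.

Lemma meager_empty {G} (d : G -> G -> R) : meager d (fun _ => False).
Proof. exists (fun _ => fun _ => False). split. intros; apply nwd_empty. intros z []. Qed.

Lemma meager_cunion {G} (d : G -> G -> R) (A : nat -> G -> Prop) :
  (forall n, meager d (A n)) -> meager d (fun z => exists n, A n z).
Proof.
  intros H.
  pose (f n := proj1_sig (constructive_indefinite_description _ (H n))).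
  assert (Hf : forall n, (forall k, nwd d (f n k)) /\ forall z, A n z -> exists k, f n k z).
  { intro n. unfold f. destruct (constructive_indefinite_description _ (H n)) as [N HN]. exact HN. }
  exists (fun j => f (fst (of_nat j)) (snd (of_nat j))). split.
  - intro j. apply (proj1 (Hf _)).
  - intros z [n Hz]. destruct (proj2 (Hf n) z Hz) as [k Hk].
    exists (to_nat (n, k)). rewrite cancel_of_to. exact Hk.
Qed.

Lemma meager_union2 {G} (d : G -> G -> R) (A B : G -> Prop) :
  meager d A -> meager d B -> meager d (fun z => A z \/ B z).
Proof.
  intros HA HB.
  apply meager_sub with (fun z => exists n, (match n with O => A | _ => B end) z).
  - apply meager_cunion. intros [|n]; auto.
  - intros z [H|H]. exists O; auto. exists 1%nat; auto.
Qed.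

Lemma ball_open {G} (d : G -> G -> R) c r : is_metric d ->
  metric_open d (fun z => d c z < r).
Proof.
  intros (Hpos & Heq & Hsym & Htri) x Hx. exists (r - d c x). split. lra.
  intros y Hy. specialize (Htri c x y). lra.
Qed.

Lemma d_refl {G} (d : G -> G -> R) x : is_metric d -> d x x = 0.
Proof. intros (Hpos & Heq & Hsym & Htri). apply Heq. reflexivity. Qed.

Lemma baire_step {G} (d : G -> G -> R) (N : G -> Prop) x r k :
  is_metric d -> nwd d N -> 0 < r ->
  exists x' r', 0 < r' /\ r' <= / (2 * INR (S k)) /\
    forall z, d x' z <= r' -> d x z < r /\ ~ N z.
Proof.
  intros Hm HN Hr.
  destruct (HN (fun z => d x z < r) (ball_open d x r Hm)) as (V & HV & [y Hy] & HVU & HVN).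
  { exists x. rewrite d_refl; auto. }
  destruct (HV y Hy) as (eps & Heps & Hb).
  assert (Hk : 0 < / (2 * INR (S k))).
  { apply Rinv_0_lt_compat. pose proof (lt_0_INR (S k)). assert (0 < INR (S k)) by (apply lt_0_INR; lia). lra. }
  exists y, (Rmin (eps/2) (/ (2 * INR (S k)))). split; [|split].
  - apply Rmin_glb_lt; lra.
  - apply Rmin_r.
  - intros z Hz. assert (d y z < eps). { pose proof (Rmin_l (eps/2) (/ (2 * INR (S k)))). lra. }
    auto.
Qed.
Lemma baire {G} (d : G -> G -> R) : is_metric d -> metric_complete d ->
  forall x r, 0 < r -> ~ meager d (fun z => d x z < r).
Proof.
  intros Hm Hc x r Hr [N [HN Hcov]].
  pose proof Hm as (Hpos & Heq & Hsym & Htri).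
  assert (Hst : forall k (p : G * R), exists p' : G * R, 0 < snd p ->
    (0 < snd p' /\ snd p' <= / (2 * INR (S k)) /\
     forall z, d (fst p') z <= snd p' -> d (fst p) z < snd p /\ ~ N k z)).
  { intros k [y s]. destruct (classic (0 < s)) as [Hs|Hs].
    - destruct (baire_step d (N k) y s k Hm (HN k) Hs) as (x' & r' & H1 & H2 & H3).
      exists (x', r'). intros _. simpl. auto.
    - exists (y, s). intro; simpl in *; contradiction. }
  pose (f k p := proj1_sig (constructive_indefinite_description _ (Hst k p))).
  assert (Hf : forall k p, 0 < snd p -> (0 < snd (f k p) /\ snd (f k p) <= / (2 * INR (S k)) /\
     forall z, d (fst (f k p)) z <= snd (f k p) -> d (fst p) z < snd p /\ ~ N k z)).
  { intros k p. unfold f. destruct (constructive_indefinite_description _ (Hst k p)) as [q Hq]. exact Hq. }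
  pose (u := fix u n := match n with O => (x, r) | S k => f k (u k) end).
  assert (Hu0 : u O = (x, r)) by reflexivity.
  assert (HuS : forall k, u (S k) = f k (u k)) by reflexivity.
  assert (Hpos' : forall n, 0 < snd (u n)).
  { induction n. rewrite Hu0; simpl; auto. rewrite HuS. apply Hf; auto. }
  assert (Hspec : forall k, 0 < snd (u (S k)) /\ snd (u (S k)) <= / (2 * INR (S k)) /\
     forall z, d (fst (u (S k))) z <= snd (u (S k)) -> d (fst (u k)) z < snd (u k) /\ ~ N k z).
  { intro k. rewrite HuS. apply Hf; auto. }
  assert (Hnest : forall k j z, d (fst (u (S k + j)%nat)) z <= snd (u (S k + j)%nat) ->
     d (fst (u (S k))) z <= snd (u (S k))).
  { intros k j. induction j; intros z Hz.
    - rewrite Nat.add_0_r in Hz. exact Hz.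
    - rewrite Nat.add_succ_r in Hz. apply IHj.
      destruct (Hspec (S k + j)%nat) as (_ & _ & H3). left. apply (H3 z Hz). }
  assert (Hin : forall k n, (S k <= n)%nat -> d (fst (u (S k))) (fst (u n)) <= snd (u (S k))).
  { intros k n Hkn. replace n with (S k + (n - S k))%nat by lia.
    apply Hnest with (n - S k)%nat. rewrite d_refl; auto. left; auto. }
  destruct (Hc (fun n => fst (u n))) as [l Hl].
  { intros eps Heps. destruct (archimed_cor1 eps Heps) as [N0 [HN0 HN0p]].
    destruct N0 as [|k]; [lia|]. exists (S k). intros m n Hm' Hn'.
    pose proof (Hin k m Hm'). pose proof (Hin k n Hn').
    destruct (Hspec k) as (_ & H2 & _).
    assert (Hk : 0 < INR (S k)) by (apply lt_0_INR; lia).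
    assert (E : / (2 * INR (S k)) = (/ INR (S k)) * (1/2)) by (field; lra). rewrite E in H2. set (t := / INR (S k)) in *.
    specialize (Htri (fst (u m)) (fst (u (S k))) (fst (u n))).
    pose proof (Hsym (fst (u m)) (fst (u (S k)))). lra. }
  assert (Hl' : forall k, d (fst (u (S k))) l <= snd (u (S k))).
  { intro k. destruct (Rle_or_lt (d (fst (u (S k))) l) (snd (u (S k)))) as [H|H]; auto.
    exfalso. destruct (Hl (d (fst (u (S k))) l - snd (u (S k))) ltac:(lra)) as [N0 HN0].
    pose (n := Nat.max N0 (S k)).
    specialize (HN0 n ltac:(unfold n; lia)). specialize (Hin k n ltac:(unfold n; lia)).
    specialize (Htri (fst (u (S k))) (fst (u n)) l). lra. }
  destruct (Hspec O) as (_ & _ & H3). destruct (H3 l (Hl' O)) as [Hb _].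
  rewrite Hu0 in Hb. simpl in Hb.
  destruct (Hcov l Hb) as [n Hn].
  destruct (Hspec n) as (_ & _ & H4). apply (proj2 (H4 l (Hl' n))). exact Hn.
Qed.

Lemma open_nonempty_nm {G} (d : G -> G -> R) (O : G -> Prop) g :
  is_metric d -> metric_complete d -> metric_open d O -> O g -> ~ meager d O.
Proof.
  intros Hm Hc HO Hg HM. destruct (HO g Hg) as (eps & Heps & Hb).
  apply (baire d Hm Hc g eps Heps). apply meager_sub with O; auto.
Qed.
Definition cl {G} (d : G -> G -> R) (O : G -> Prop) z :=
  forall eps, 0 < eps -> exists w, O w /\ d z w < eps.

Lemma open_inter {G} (d : G -> G -> R) U V :
  metric_open d U -> metric_open d V -> metric_open d (fun z => U z /\ V z).
Proof.
  intros HU HV z [Hu Hv]. destruct (HU z Hu) as (e1 & He1 & H1).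
  destruct (HV z Hv) as (e2 & He2 & H2). exists (Rmin e1 e2). split.
  apply Rmin_glb_lt; auto. intros y Hy. split.
  apply H1. pose proof (Rmin_l e1 e2); lra. apply H2. pose proof (Rmin_r e1 e2); lra.
Qed.

Lemma nwd_boundary {G} (d : G -> G -> R) O : metric_open d O ->
  nwd d (fun z => cl d O z /\ ~ O z).
Proof.
  intros HO U HU [x Hx]. destruct (classic (exists w, U w /\ O w)) as [[w Hw]|Hn].
  - exists (fun z => U z /\ O z). split. apply open_inter; auto. split. exists w; auto.
    split. intros z [? ?]; auto. intros z [_ Hz] [_ Hz']. auto.
  - exists U. split; auto. split. exists x; auto. split; auto.
    intros z Hz [Hc _]. destruct (HU z Hz) as (eps & Heps & Hb).
    destruct (Hc eps Heps) as (w & Hw & Hd). apply Hn. exists w; split; auto.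
Qed.

Lemma cl_compl_open {G} (d : G -> G -> R) O : is_metric d ->
  metric_open d (fun z => ~ cl d O z).
Proof.
  intros Hm z Hz. pose proof Hm as (Hpos & Heq & Hsym & Htri).
  unfold cl in Hz. apply not_all_ex_not in Hz. destruct Hz as [eps Heps].
  apply imply_to_and in Heps. destruct Heps as [Heps Hn].
  exists (eps/2). split. lra. intros y Hy Hcy. destruct (Hcy (eps/2) ltac:(lra)) as (w & Hw & Hd).
  apply Hn. exists w. split; auto. specialize (Htri z y w). lra.
Qed.

Lemma sub_cl {G} (d : G -> G -> R) (O : G -> Prop) z : is_metric d -> O z -> cl d O z.
Proof. intros Hm Hz eps Heps. exists z. rewrite d_refl; auto. Qed.

Lemma meager_nwd {G} (d : G -> G -> R) N : nwd d N -> meager d N.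
Proof. intro H. exists (fun _ => N). split; auto. intros z Hz; exists O; auto. Qed.

Definition BP {G} (d : G -> G -> R) (A : G -> Prop) :=
  exists O, metric_open d O /\ meager d (fun z => (A z /\ ~ O z) \/ (O z /\ ~ A z)).

Lemma BP_open {G} (d : G -> G -> R) A : metric_open d A -> BP d A.
Proof. intro H. exists A. split; auto. apply meager_sub with (fun _ => False).
  apply meager_empty. intros z [[? ?]|[? ?]]; auto. Qed.

Lemma BP_ext {G} (d : G -> G -> R) A B : BP d A -> (forall z, A z <-> B z) -> BP d B.
Proof. intros [O [HO HM]] H. exists O. split; auto. eapply meager_sub. exact HM.
  intros z [[H1 H2]|[H1 H2]]. left; split; auto; apply H; auto.
  right; split; auto. intro; apply H2; apply H; auto. Qed.

Lemma BP_compl {G} (d : G -> G -> R) A : is_metric d -> BP d A -> BP d (fun z => ~ A z).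
Proof.
  intros Hm [O [HO HM]]. exists (fun z => ~ cl d O z). split. apply cl_compl_open; auto.
  apply meager_sub with (fun z => ((A z /\ ~ O z) \/ (O z /\ ~ A z)) \/ (cl d O z /\ ~ O z)).
  apply meager_union2; auto. apply meager_nwd. apply nwd_boundary; auto.
  intros z [[H1 H2]|[H1 H2]].
  - apply NNPP in H2. destruct (classic (O z)). left; right; auto. right; auto.
  - apply NNPP in H2. left; left; split; auto. intro; apply H1; apply sub_cl; auto.
Qed.

Lemma BP_cunion {G} (d : G -> G -> R) (A : nat -> G -> Prop) :
  (forall n, BP d (A n)) -> BP d (fun z => exists n, A n z).
Proof.
  intros H.
  pose (f n := proj1_sig (constructive_indefinite_description _ (H n))).
  assert (Hf : forall n, metric_open d (f n) /\ meager d (fun z => (A n z /\ ~ f n z) \/ (f n z /\ ~ A n z))).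
  { intro n. unfold f. destruct (constructive_indefinite_description _ (H n)) as [O HO]. exact HO. }
  exists (fun z => exists n, f n z). split.
  - intros z [n Hz]. destruct (proj1 (Hf n) z Hz) as (eps & Heps & Hb).
    exists eps. split; auto. intros y Hy. exists n; auto.
  - apply meager_sub with (fun z => exists n, (A n z /\ ~ f n z) \/ (f n z /\ ~ A n z)).
    apply meager_cunion. intro n; apply (proj2 (Hf n)).
    intros z [[[n Hn] H2]|[[n Hn] H2]].
    + exists n. left. split; auto. intro; apply H2; exists n; auto.
    + exists n. right. split; auto. intro; apply H2; exists n; auto.
Qed.
Definition dense_seq {G} (d : G -> G -> R) (s : nat -> option G) :=
  forall x eps, 0 < eps -> exists n y, s n = Some y /\ d x y < eps.

Lemma invS_pos m : 0 < / INR (S m).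
Proof. apply Rinv_0_lt_compat. apply lt_0_INR. lia. Qed.

Lemma K_lemma {G} (d : G -> G -> R) (s : nat -> option G) A U :
  is_metric d -> metric_complete d -> dense_seq d s -> BP d A -> metric_open d U ->
  (~ meager d (fun z => ~ A z /\ U z) <->
   exists n m c, s n = Some c /\ (forall w, d c w < / INR (S m) -> U w) /\
     meager d (fun w => A w /\ d c w < / INR (S m))).
Proof.
  intros Hm Hc Hs [O [HO HM]] HU. pose proof Hm as (Hpos & Heq & Hsym & Htri). split.
  - intro Hnm. apply NNPP. intro Hno. apply Hnm.
    assert (Hcl : forall z, U z -> cl d O z).
    { intros z Hz. apply NNPP. intro Hncl. unfold cl in Hncl.
      apply not_all_ex_not in Hncl. destruct Hncl as [eps Heps].
      apply imply_to_and in Heps. destruct Heps as [Heps Hn].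
      destruct (HU z Hz) as (eps2 & Heps2 & Hb).
      destruct (archimed_cor1 (Rmin eps eps2 / 2)) as [N0 [HN0 HN0p]].
      { assert (0 < Rmin eps eps2) by (apply Rmin_glb_lt; auto). lra. }
      destruct N0 as [|m]; [lia|].
      pose proof (invS_pos m).
      destruct (Hs z (/ INR (S m)) (invS_pos m)) as (n & c & Hsn & Hzc).
      pose proof (Rmin_l eps eps2). pose proof (Rmin_r eps eps2).
      apply Hno. exists n, m, c. split; auto. split.
      + intros w Hw. apply Hb. specialize (Htri z c w). lra.
      + apply meager_sub with (1 := HM). intros w [Hw1 Hw2]. left. split; auto.
        intro Hw. apply Hn. exists w. split; auto. specialize (Htri z c w). lra. }
    apply meager_sub with (fun z => ((A z /\ ~ O z) \/ (O z /\ ~ A z)) \/ (cl d O z /\ ~ O z)).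
    apply meager_union2; auto. apply meager_nwd. apply nwd_boundary; auto.
    intros z [Hz1 Hz2]. destruct (classic (O z)). left; right; auto. right; split; auto.
  - intros (n & m & c & Hsn & Hsub & Hmg) Hmg2.
    apply (baire d Hm Hc c (/ INR (S m)) (invS_pos m)).
    apply meager_sub with (fun w => (A w /\ d c w < / INR (S m)) \/ (~ A w /\ U w)).
    apply meager_union2; auto.
    intros w Hw. destruct (classic (A w)); [left|right]; auto.
Qed.
Definition local_top {Y} (tY : topology Y) :=
  forall W, (forall y, W y -> exists A, tY A /\ A y /\ forall a, A a -> W a) -> tY W.

Lemma borel_empty {Y} (t : topology Y) S : borel t S -> borel t (fun _ => False).
Proof.
  intro H. apply borel_ext with (fun y => ~ exists n, (match n with O => S | _ => fun y => ~ S y end) y).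
  apply borel_compl. apply borel_cunion. intros [|n]; auto. apply borel_compl; auto.
  intro y. split; auto. intro Hn. apply Hn. destruct (classic (S y)). exists O; auto. exists 1%nat; auto.
Qed.

Theorem category_borel {Y G} (tY : topology Y) (tG : topology G) d s B :
  local_top tY -> (forall U, tG U <-> metric_open d U) -> is_metric d -> metric_complete d ->
  dense_seq d s ->
  borel (prod_topology tY tG) B ->
  (forall y, BP d (fun g => B (y, g))) /\
  forall U, metric_open d U -> borel tY (fun y => ~ meager d (fun g => B (y, g) /\ U g)).
Proof.
  intros Hloc HtG Hm Hc Hs HB.
  induction HB as [W HW | A HA IH | A HA IH | A B' HA IH Hext].
  - assert (Hsec : forall y, metric_open d (fun g => W (y, g))).
    { intros y g Hg. destruct (HW (y, g) Hg) as (A & B' & HA & HB' & Ha & Hb & Hr).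
      simpl in *. destruct (proj1 (HtG B') HB' g Hb) as (eps & Heps & Hball).
      exists eps. split; [auto|]. intros w Hw. apply (Hr y w); auto. }
    split. intro y. apply BP_open; auto.
    intros U HU. apply borel_ext with (fun y => exists g, W (y, g) /\ U g).
    + apply borel_open. apply Hloc. intros y [g [Hg Hu]].
      destruct (HW (y, g) Hg) as (A & B' & HA & HB' & Ha & Hb & Hr). simpl in *.
      exists A. split; auto. split; auto. intros a Ha'. exists g. split; auto.
    + intro y. split.
      * intros [g [Hg Hu]]. apply open_nonempty_nm with g; auto. apply open_inter; auto.
      * intro Hnm. apply NNPP. intro Hno. apply Hnm. apply meager_sub with (fun _ => False).
        apply meager_empty. intros g Hg. apply Hno. exists g; auto.
  - destruct IH as [IHbp IHb]. split.
    + intro y. apply BP_compl; auto.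
    + intros U HU.
      pose (Q n m y := exists c, s n = Some c /\ (forall w, d c w < / INR (S m) -> U w) /\
                 meager d (fun w => A (y, w) /\ d c w < / INR (S m))).
      apply borel_ext with (fun y => exists n, exists m, Q n m y).
      * apply borel_cunion. intro n. apply borel_cunion. intro m.
        destruct (classic (exists c, s n = Some c /\ (forall w, d c w < / INR (S m) -> U w)))
          as [[c [Hc1 Hc2]]|Hno].
        -- apply borel_ext with
             (fun y => ~ ~ meager d (fun w => A (y, w) /\ d c w < / INR (S m))).
           apply borel_compl. apply IHb. apply ball_open; auto.
           intro y. unfold Q. split.
           ++ intro H. exists c. split; auto. split; auto. apply NNPP; auto.
           ++ intros (c' & Hc' & _ & H) Hn. rewrite Hc1 in Hc'. injection Hc' as ->. auto.
        -- apply borel_ext with (fun _ => False).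
           apply borel_empty with (fun y => ~ meager d (fun g => A (y, g) /\ U g)). apply IHb; auto.
           intro y; split; [tauto|]. intros (c & H1 & H2 & _). apply Hno. exists c; auto.
      * intro y. rewrite (K_lemma d s (fun g => A (y, g)) U Hm Hc Hs (IHbp y) HU).
        unfold Q. split.
        -- intros (n & m & c & H). exists n, m, c; auto.
        -- intros (n & m & c & H). exists n, m, c; auto.
  - split.
    + intro y. apply (BP_cunion d (fun n g => A n (y, g))). intro n. apply (proj1 (IH n)).
    + intros U HU. apply borel_ext with (fun y => exists n, ~ meager d (fun g => A n (y, g) /\ U g)).
      * apply borel_cunion. intro n. apply (proj2 (IH n)); auto.
      * intro y. split.
        -- intros [n Hn] HM. apply Hn. eapply meager_sub. exact HM.
           intros g [Hg Hu]. split; auto. exists n; auto.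
        -- intro Hnm. apply NNPP. intro Hno. apply Hnm.
           apply meager_sub with (fun g => exists n, A n (y, g) /\ U g).
           apply meager_cunion. intro n. apply NNPP. intro H. apply Hno. exists n; auto.
           intros g [[n Hg] Hu]. exists n; auto.
  - destruct IH as [IHbp IHb]. split.
    + intro y. apply BP_ext with (fun g => A (y, g)). auto. intro g; apply Hext.
    + intros U HU. apply borel_ext with (fun y => ~ meager d (fun g => A (y, g) /\ U g)); auto.
      intro y. split; intros H HM; apply H; eapply meager_sub; try exact HM;
        intros g [Hg Hu]; split; auto; apply Hext; auto.
Qed.
Lemma nwd_preimage {G} (d : G -> G -> R) (phi psi : G -> G) N :
  (forall z, phi (psi z) = z) -> (forall z, psi (phi z) = z) ->
  (forall U, metric_open d U -> metric_open d (fun z => U (phi z))) ->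
  (forall U, metric_open d U -> metric_open d (fun z => U (psi z))) ->
  nwd d N -> nwd d (fun z => N (phi z)).
Proof.
  intros H1 H2 Hphi Hpsi HN U HU [x Hx].
  destruct (HN (fun z => U (psi z)) (Hpsi U HU)) as (V & HV & [v Hv] & HVU & HVN).
  { exists (phi x). rewrite H2. auto. }
  exists (fun w => V (phi w)). split; [apply Hphi; auto|]. split.
  exists (psi v). rewrite H1; auto. split.
  intros z Hz. rewrite <- (H2 z). apply HVU; auto.
  intros z Hz. apply HVN; auto.
Qed.

Lemma meager_preimage {G} (d : G -> G -> R) (phi psi : G -> G) M :
  (forall z, phi (psi z) = z) -> (forall z, psi (phi z) = z) ->
  (forall U, metric_open d U -> metric_open d (fun z => U (phi z))) ->
  (forall U, metric_open d U -> metric_open d (fun z => U (psi z))) ->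
  meager d M -> meager d (fun z => M (phi z)).
Proof.
  intros H1 H2 Hphi Hpsi [N [HN Hcov]]. exists (fun n z => N n (phi z)). split.
  intro n. apply nwd_preimage with psi; auto. intros z Hz. apply Hcov; auto.
Qed.

Lemma local_prod {A B} (tA : topology A) (tB : topology B) : local_top (prod_topology tA tB).
Proof.
  intros W HW p Hp. destruct (HW p Hp) as (O & HO & Hpo & HOW).
  destruct (HO p Hpo) as (U & V & HU & HV & Hu & Hv & Hr).
  exists U, V. repeat split; auto.
Qed.

Lemma rect_open {A B} (tA : topology A) (tB : topology B) U V :
  tA U -> tB V -> prod_topology tA tB (fun p => U (fst p) /\ V (snd p)).
Proof. intros HU HV p [Hu Hv]. exists U, V. repeat split; auto. Qed.

Lemma borel_preimage {A B} (t1 : topology A) (t2 : topology B) (f : A -> B) S :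
  (forall V, t2 V -> t1 (fun x => V (f x))) -> borel t2 S -> borel t1 (fun x => S (f x)).
Proof.
  intros Hf HS. induction HS as [U HU | S HS IH | S HS IH | S S' HS IH Hext].
  - apply borel_open; auto.
  - apply borel_compl; auto.
  - apply (borel_cunion t1 (fun n x => S n (f x))); auto.
  - apply borel_ext with (fun x => S (f x)); auto.
Qed.
Theorem mainTheorem9 (G X : Type) (tG : topology G) (tX : topology X)
  (mul : G -> G -> G) (inv : G -> G) (e : G) (act : G -> X -> X)
  (F : X -> X -> Prop) :
  polish_group tG mul inv e ->
  polish tX ->
  continuous_action tG tX mul e act ->
  equivalence_rel F ->
  borel_rel tX F ->
  (forall x y, F x y -> orbit_eqrel act x y) ->
  (* each E-class contains at most countably many F-classes *)
  (forall x, exists s : nat -> X,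
      forall y, orbit_eqrel act x y -> exists n, F y (s n)) ->
  borel_rel tX (orbit_eqrel act).
Proof.
  intros (Hgrp & (d & Hm & Hc & [s Hs] & HtG) & Hmulc & Hinvc) _ (Hact1 & Hact2 & Hactc)
    (Frefl & Fsym & Ftrans) HF HFE Hcount.
  destruct Hgrp as (Hassoc & Hid & Hinv).
  assert (Hs' : dense_seq d s) by exact Hs.
  set (f := fun q : ((X * X) * G) * G =>
         (act (snd q) (fst (fst (fst q))), act (snd (fst q)) (snd (fst (fst q))))).
  assert (Hfc : forall V, prod_topology tX tX V ->
     prod_topology (prod_topology (prod_topology tX tX) tG) tG (fun q => V (f q))).
  { intros V HV [[[x y] h] g] Hq. unfold f in Hq; simpl in Hq.
    destruct (HV _ Hq) as (A & B & HA & HB & Ha & Hb & Hr). simpl in *.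
    destruct (Hactc _ HA (g, x) Ha) as (Ug & Ux & HUg & HUx & Hug & Hux & Hr1).
    destruct (Hactc _ HB (h, y) Hb) as (Uh & Uy & HUh & HUy & Huh & Huy & Hr2).
    simpl in *.
    exists (fun r : (X * X) * G => (Ux (fst (fst r)) /\ Uy (snd (fst r))) /\ Uh (snd r)), Ug.
    split. apply (rect_open _ _ (fun p : X * X => Ux (fst p) /\ Uy (snd p)) Uh); auto.
    apply (rect_open _ _ Ux Uy); auto.
    split; auto. split. simpl; auto. split; auto.
    intros [[a1 a2] a3] b [[H1 H2] H3] Hb'. unfold f; simpl in *.
    apply Hr. apply (Hr1 b a1); auto. apply (Hr2 a3 a2); auto. }
  set (B1 := fun q : ((X * X) * G) * G => F (fst (f q)) (snd (f q))).
  assert (HB1 : borel (prod_topology (prod_topology (prod_topology tX tX) tG) tG) B1).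
  { apply (borel_preimage _ (prod_topology tX tX) f (fun p => F (fst p) (snd p))); auto. }
  assert (Hfull : metric_open d (fun _ : G => True)).
  { intros z _. exists 1. split; auto; lra. }
  set (C1 := fun y => ~ meager d (fun g => B1 (y, g) /\ True)).
  assert (HC1 : borel (prod_topology (prod_topology tX tX) tG) C1).
  { apply (proj2 (category_borel _ tG d s B1 (local_prod _ _) HtG Hm Hc Hs' HB1)); auto. }
  assert (HC2 := proj2 (category_borel _ tG d s C1 (local_prod _ _) HtG Hm Hc Hs' HC1) _ Hfull).
  unfold borel_rel. eapply borel_ext. exact HC2.
  intros [x y]. simpl. unfold C1, B1, f; simpl. split.
  - intro Hnm. apply NNPP. intro Hno. apply Hnm. apply meager_sub with (fun _ => False).
    apply meager_empty. intros h [Hh _]. apply Hh. apply meager_sub with (fun _ => False).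
    apply meager_empty. intros g [Hg _]. apply Hno.
    destruct (HFE _ _ Hg) as [k Hk].
    exists (mul (inv h) (mul k g)). rewrite Hact2, Hact2, Hk, <- Hact2.
    rewrite (proj1 (Hinv h)). apply Hact1.
  - intros [g' Hg']. destruct (Hcount x) as [sx Hsx].
    assert (Hex : exists n, ~ meager d (fun g => F (act g x) (sx n))).
    { apply NNPP. intro Hno.
      apply (baire d Hm Hc e 1 ltac:(lra)).
      apply meager_sub with (fun g => exists n, F (act g x) (sx n)).
      apply meager_cunion. intro n. apply NNPP. intro H. apply Hno. exists n; auto.
      intros g _. apply Hsx. exists g; auto. }
    destruct Hex as [n Hn]. intro HM. apply Hn.
    assert (Hrm : forall c U, metric_open d U -> metric_open d (fun k => U (mul k c))).
    { intros c U HU k Hk. apply HtG in HU. destruct (Hmulc _ HU (k, c) Hk) as (A & B & HA & HB & Ha & Hb & Hr).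
      simpl in *. destruct (proj1 (HtG A) HA k Ha) as (eps & Heps & Hball).
      exists eps. split; [auto|]. intros w Hw. apply (Hr w c); auto. }
    assert (HMB : meager d (fun h => F (act h y) (sx n))).
    { eapply meager_sub. exact HM. intros h Hh. split; auto. intro HM2. apply Hn.
      eapply meager_sub. exact HM2. intros g Hg. split; auto.
      apply Ftrans with (sx n); auto. }
    pose proof (meager_preimage d (fun k => mul k (inv g')) (fun k => mul k g') _
      ltac:(intro z; cbv beta; rewrite <- Hassoc, (proj2 (Hinv g')), (proj2 (Hid z)); auto)
      ltac:(intro z; cbv beta; rewrite <- Hassoc, (proj1 (Hinv g')), (proj2 (Hid z)); auto)
      (fun U HU => Hrm _ U HU) (fun U HU => Hrm _ U HU) HMB) as HP.
    eapply meager_sub. exact HP. intros k Hk. simpl.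
    rewrite <- Hg', Hact2, <- (Hact2 (inv g')), (proj1 (Hinv g')), Hact1. exact Hk.
Qed.
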